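(* Let $q$ be a prime power, $m\ge1$, $1\le k<n$. Let $E\in \mathcal T(k,n)$ and let $\mathcal{U}_0 := \{(u_1,\dots,u_n) \in \mathbb{F}_q^n \mid u_{k+1}=\dots=u_n=0 \}$. Then $\deg f_E=k-\dim\left(\mathrm{rs}(E)\cap \mathcal{U}_0 \right)$.
   Context: $\mathcal T(k,n)=\{E\in \mathbb{F}_q^{k\times n} \mid E \text{ is in reduced row echelon form and } \mathrm{rk}(E)=k\}$; $\mathrm{rs}(E)$ is the $\mathbb{F}_q$-row space of $E$. Let $X$ be the $k\times(n-k)$ matrix whose entries are the distinct indeterminates $x_1,\dots,x_{k(n-k)}$. For $E\in\mathcal T(k,n)$, $f_E:=\det([\,I_k\mid X\,]E^T)\in\mathbb{F}_{q^m}[x_1,\dots,x_{k(n-k)}]$, and $\deg$ denotes total degree. *)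

(* Defs.v *)
From HB Require Import structures.
From mathcomp Require Import all_boot all_order all_algebra all_field.
From mathcomp Require Import mpoly.
Set Implicit Arguments. Unset Strict Implicit. Unset Printing Implicit Defensive.
Import GRing.Theory.
Local Open Scope ring_scope.

Definition is_rref (F : fieldType) (k n : nat) (E : 'M[F]_(k, n)) : Prop :=
  exists p : 'I_k -> 'I_n,
    [/\ {mono p : i j / (i < j)%N},
        forall i, E i (p i) = 1,
        forall i i', i' != i -> E i' (p i) = 0
      & forall i (j : 'I_n), (j < p i)%N -> E i j = 0].

Definition in_T (F : fieldType) (k n : nat) (E : 'M[F]_(k, n)) : Prop :=
  is_rref E /\ \rank E = k.

(* U_0 = { u in F^n | u_{k+1} = ... = u_n = 0 }, as the row space of the
   n x n diagonal matrix with ones in the first k diagonal positions *)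
Definition U0mx (F : fieldType) (k n : nat) : 'M[F]_n :=
  \matrix_(i < n, j < n) (((i == j) && (i < k)%N)%:R : F).

Definition Xmx (R : comRingType) (k n : nat) : 'M[{mpoly R[k * (n - k)]}]_(k, n - k) :=
  \matrix_(i < k, j < n - k) 'X_(mxvec_index i j).

Definition IXmx (R : comRingType) (k n : nat) (H : (k <= n)%N)
  : 'M[{mpoly R[k * (n - k)]}]_(k, n) :=
  castmx (erefl k, subnKC H) (row_mx 1%:M (Xmx R k n)).

(* f_E = det([I_k | X] E^T), with E's entries embedded F_q -> F_{q^m} = L *)
Definition fE (F : fieldType) (L : fieldExtType F) (k n : nat) (H : (k <= n)%N)
  (E : 'M[F]_(k, n)) : {mpoly L[k * (n - k)]} :=
  \det (IXmx L H *m (map_mx (fun a : F => (a%:A : L)%:MP) E)^T).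

(* total degree (for a nonzero polynomial) *)
Definition tdeg (R : ringType) (N : nat) (p : {mpoly R[N]}) : nat := (msize p).-1.

(* Main.v *)
Require Import Defs.
From HB Require Import structures.
From mathcomp Require Import all_boot all_order all_algebra all_field.
From mathcomp Require Import mpoly zify perm fingroup.
Set Warnings "-notation-overridden -ambiguous-paths -notation-incompatible-prefix -deprecated".
Import GRing.Theory.
Local Open Scope ring_scope.
Set Implicit Arguments. Unset Strict Implicit. Unset Printing Implicit Defensive.

Definition L0 (R : nzRingType) (k n : nat) : 'M[R]_(n, k) :=
  \matrix_(j < n, a < k) ((j : nat) == a)%:R.
Definition R0 (R : nzRingType) (k n : nat) : 'M[R]_(n, n - k) :=
  \matrix_(j < n, l < n - k) ((j : nat) == (k + l)%N)%:R.

Lemma R0tR0 (R : nzRingType) k n : (R0 R k n)^T *m R0 R k n = 1%:M.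
Proof.
apply/matrixP=> l l'; rewrite !mxE.
have hl : (k + l < n)%N by have := ltn_ord l; rewrite ltn_subRL.
rewrite (bigD1 (Ordinal hl)) //= big1 ?addr0.
  by rewrite !mxE /= eqxx mul1r eqn_add2l.
move=> j /eqP hj; rewrite !mxE; case: (@eqP _ (j : nat) (k + l)%N) => [e|_]; last by rewrite mul0r.
by case: hj; apply/val_inj.
Qed.

Lemma U0mxE (F : fieldType) k n : U0mx F k n = 1%:M - R0 F k n *m (R0 F k n)^T.
Proof.
apply/matrixP=> i j; rewrite !mxE.
case: (leqP k i) => hi.
- have hl : (i - k < n - k)%N by have := ltn_ord i; lia.
  rewrite (bigD1 (Ordinal hl)) //= big1 ?addr0.
    rewrite !mxE /= subnKC // eqxx mul1r andbF.
    by rewrite -[(j:nat) == i]/(j == i) eq_sym subrr.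
  move=> l /eqP hl'; rewrite !mxE; case: (@eqP _ (i:nat) (k + l)%N) => [e|]; last by rewrite mul0r.
  by case: hl'; apply/val_inj => /=; rewrite e addKn.
- rewrite big1 ?subr0 ?andbT //.
  by move=> l _; rewrite !mxE; case: (@eqP _ (i:nat) (k + l)%N) => [e|]; [rewrite e ltnNge leq_addr in hi|rewrite mul0r].
Qed.

Lemma subU0P (F : fieldType) k n m (v : 'M[F]_(m, n)) :
  (v <= U0mx F k n)%MS <-> v *m R0 F k n = 0.
Proof.
rewrite U0mxE; split.
- case/submxP=> w ->; rewrite -mulmxA mulmxBl mul1mx -mulmxA R0tR0 mulmx1 subrr.
  by rewrite mulmx0.
- move=> h; have -> : v = v *m (1%:M - R0 F k n *m (R0 F k n)^T).
    by rewrite mulmxBr mulmx1 mulmxA h mul0mx subr0.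
  exact: submxMl.
Qed.

Lemma rank_capU0 (F : fieldType) k n (E : 'M[F]_(k, n)) : row_free E ->
  \rank (E :&: U0mx F k n)%MS = (k - \rank (E *m R0 F k n))%N.
Proof.
move=> fE; rewrite -mxrank_ker -(mxrankMfree _ fE); apply/eqP; rewrite eqn_leq.
apply/andP; split; apply: mxrankS.
- have /submxP [u hu] := capmxSl E (U0mx F k n).
  have h2 := capmxSr E (U0mx F k n); move/subU0P: h2; rewrite hu -mulmxA => /sub_kermxP hk.
  exact: submxMr.
- rewrite sub_capmx submxMl /=; apply/subU0P; rewrite -mulmxA mulmx_ker //.
Qed.

Definition iota (F : fieldType) (L : fieldExtType F) N : {rmorphism F -> {mpoly L[N]}} :=
  (@mpolyC N L \o in_alg L)%FUN.

Definition gmat (F : fieldType) (L : fieldExtType F) k n (E : 'M[F]_(k, n)) :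
  'M[{mpoly L[k * (n - k)]}]_k :=
  (map_mx (@iota F L _) (E *m L0 F k n))^T +
  Xmx L k n *m (map_mx (@iota F L _) (E *m R0 F k n))^T.

Lemma map_L0 (F : fieldType) (S : nzRingType) (f : {rmorphism F -> S}) k n :
  map_mx f (L0 F k n) = L0 S k n.
Proof. by apply/matrixP=> i j; rewrite !mxE rmorph_nat. Qed.

Lemma map_R0 (F : fieldType) (S : nzRingType) (f : {rmorphism F -> S}) k n :
  map_mx f (R0 F k n) = R0 S k n.
Proof. by apply/matrixP=> i j; rewrite !mxE rmorph_nat. Qed.

Lemma IXmxE (L : comNzRingType) k n (H : (k <= n)%N) :
  IXmx L H = (L0 _ k n)^T + Xmx L k n *m (R0 _ k n)^T.
Proof.
apply/matrixP=> a j; rewrite /IXmx castmxE !mxE /=.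
set j' := cast_ord _ j.
case: (splitP j') => [j1 e|j2 e].
- have ej : (j : nat) = j1 by rewrite -e.
  rewrite cast_ord_id !mxE big1 ?addr0; last first.
    by move=> l _; rewrite !mxE ej; case: (@eqP _ (j1:nat) (k + l)%N) => [h|]; [have := ltn_ord j1; rewrite h ltnNge leq_addr|rewrite mulr0].
  by rewrite ej; congr (_ %:R); rewrite eq_sym.
- have ej : (j : nat) = (k + j2)%N by rewrite -e.
  rewrite cast_ord_id (bigD1 j2) //= big1 ?addr0.
    rewrite !mxE ej eqxx mulr1.
    by case: (@eqP _ (k + j2)%N a) => [h|]; [have := ltn_ord a; rewrite -h ltnNge leq_addr|rewrite add0r].
  move=> l hl; rewrite !mxE ej; case: (@eqP _ (k + j2)%N (k + l)%N) => [h|]; last by rewrite mulr0.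
  by move/eqP: hl; case; apply/val_inj; move/eqP: h; rewrite eqn_add2l => /eqP.
Qed.

Lemma fE_gmat (F : fieldType) (L : fieldExtType F) k n (H : (k <= n)%N) (E : 'M[F]_(k, n)) :
  fE L H E = \det (gmat L E).
Proof.
rewrite /fE /gmat IXmxE.
have -> : map_mx (fun a : F => (a%:A : L)%:MP) E = map_mx (@iota F L _) E by [].
rewrite !map_mxM map_L0 map_R0 !trmx_mul mulmxDl mulmxA.
by congr (\det (_ + _)); rewrite mulmxA.
Qed.

Lemma gmatM (F : fieldType) (L : fieldExtType F) k n (P : 'M[F]_k) (E : 'M[F]_(k, n)) :
  gmat L (P *m E) = gmat L E *m (map_mx (@iota F L _) P)^T.
Proof.
rewrite /gmat -!mulmxA !map_mxM !trmx_mul mulmxDl !mulmxA. by [].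
Qed.


Lemma msizeM_le' (L : fieldType) N (p q : {mpoly L[N]}) :
  (msize (p * q) <= (msize p + msize q).-1)%N.
Proof.
have [->|p0] := eqVneq p 0; first by rewrite mul0r msize0.
have [->|q0] := eqVneq q 0; first by rewrite mulr0 msize0.
by rewrite msizeM.
Qed.

Lemma msize_prod (L : fieldType) N (I : Type) (r : seq I) (P : pred I)
  (G : I -> {mpoly L[N]}) (d : I -> nat) :
  (forall i, P i -> (msize (G i) <= (d i).+1)%N) ->
  (msize (\prod_(i <- r | P i) G i) <= (\sum_(i <- r | P i) d i).+1)%N.
Proof.
move=> hG; elim/big_rec2: _ => [|i d0 p Pi IH]; first by rewrite msize1.
apply: (leq_trans (msizeM_le' _ _)); have := hG i Pi; lia.
Qed.

Lemma msize_iota (F : fieldType) (L : fieldExtType F) N (c : F) :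
  (msize (@iota F L N c) <= 1)%N.
Proof. by rewrite /iota /= msizeC; case: (_ != _). Qed.

Lemma msize_sign (L : fieldType) N (c : bool) (p : {mpoly L[N]}) :
  msize ((-1) ^+ c * p) = msize p.
Proof. by case: c; rewrite /= ?expr0 ?expr1 ?mul1r ?mulN1r ?msizeN. Qed.

Lemma msizeXi (F : fieldType) (L : fieldExtType F) N j (c : F) :
  (msize ('X_j * @iota F L N c) <= 2)%N.
Proof.
apply: (leq_trans (msizeM_le' _ _)).
by rewrite msizeX mdeg1 add2n /= ltnS; exact: msize_iota.
Qed.

Lemma gmat_upper (F : fieldType) (L : fieldExtType F) k n b (E : 'M[F]_(k, n)) :
  (forall (i : 'I_k) l, (b <= i)%N -> (E *m R0 F k n) i l = 0) -> (b <= k)%N ->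
  (msize (\det (gmat L E)) <= b.+1)%N.
Proof.
move=> hz hb; rewrite -det_tr /determinant.
apply: (leq_trans (msize_sum _ _ _)); apply/bigmax_leqP_seq => s _ _.
rewrite msize_sign.
have -> : b = (\sum_(i < k) (i < b : nat))%N.
  rewrite (eq_bigr (fun i : 'I_k => if (i < b)%N then 1%N else 0%N)); last by move=> i _; case: (_ < _)%N.
  by rewrite -big_mkcond -(big_ord_widen _ (fun _ => 1%N) hb) sum1_card card_ord.
apply: msize_prod => i _; rewrite !mxE.
case: (ltnP i b) => hi.
- apply: (leq_trans (msizeD_le _ _)); rewrite geq_max; apply/andP; split.
    by apply: (leq_trans (msize_iota _ _ _)).
  apply: (leq_trans (msize_sum _ _ _)); apply/bigmax_leqP_seq => l _ _.
  rewrite [Xmx _ _ _ _ _]mxE [_^T _ _]mxE [map_mx _ _ _ _]mxE; exact: msizeXi.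
- rewrite [X in _ + X]big1 ?addr0; first exact: msize_iota.
  by move=> l _; rewrite [_^T _ _]mxE [map_mx _ _ _ _]mxE hz // rmorph0 mulr0.
Qed.

Lemma size_mmap1 (L : fieldType) N (h : 'I_N -> {poly L}) (m : 'X_{1..N}) :
  (forall i, (size (h i) <= 2)%N) -> (size (mmap1 h m) <= (mdeg m).+1)%N.
Proof.
move=> hh; rewrite /mmap1 mdegE.
elim/big_rec2: _ => [|i p d0 _ IH]; first by rewrite size_poly1.
apply: (leq_trans (size_polyMleq _ _)).
have := size_poly_exp_leq (h i) (m i); have := hh i.
move: (size (h i ^+ m i)) (size (h i)) (size p) IH => a c e IH hc ha.
have : ((c.-1 * m i).+1 <= (m i).+1)%N.
  by rewrite ltnS; apply: leq_trans (leq_mul (_ : c.-1 <= 1)%N (leqnn _)) _; [lia|rewrite mul1n].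
lia.
Qed.

Lemma size_mmap (L : fieldType) N (h : 'I_N -> {poly L}) (p : {mpoly L[N]}) :
  (forall i, (size (h i) <= 2)%N) -> (size (mmap (@polyC L) h p) <= msize p)%N.
Proof.
move=> hh; rewrite /mmap; apply: (leq_trans (size_sum _ _ _)).
apply/bigmax_leqP_seq => m hm _.
rewrite mul_polyC; apply: (leq_trans (size_scale_leq _ _)).
apply: (leq_trans (size_mmap1 _ hh)); exact: msize_mdeg_lt.
Qed.

Lemma pid_mulE (R : nzRingType) k m b (M : 'M[R]_(k, m)) i j :
  ((pid_mx b : 'M[R]_k) *m M) i j = if (i < b)%N then M i j else 0.
Proof.
rewrite mxE (bigD1 i) //= big1 ?addr0.
  by rewrite mxE eqxx /=; case: (i < b)%N; rewrite ?mul1r ?mul0r.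
by move=> l hl; rewrite mxE; case: (@eqP _ (i:nat) l) => [e|]; [case/eqP: hl; apply/val_inj|rewrite mul0r].
Qed.

Lemma copid_mulE (R : nzRingType) k m b (M : 'M[R]_(k, m)) i j :
  ((copid_mx b : 'M[R]_k) *m M) i j = if (i < b)%N then 0 else M i j.
Proof.
rewrite /copid_mx mulmxBl mul1mx !mxE; have := pid_mulE b M i j; rewrite mxE => ->.
by case: ifP; rewrite ?subrr ?subr0.
Qed.

Lemma L0tL0 (R : nzRingType) k n : (k <= n)%N -> (L0 R k n)^T *m L0 R k n = 1%:M.
Proof.
move=> hk; apply/matrixP=> a a'; rewrite !mxE.
have ha : (a < n)%N by apply: leq_trans (ltn_ord a) hk.
rewrite (bigD1 (Ordinal ha)) //= big1 ?addr0.
  by rewrite !mxE /= eqxx mul1r.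
move=> j /eqP hj; rewrite !mxE; case: (@eqP _ (j:nat) a) => [e|_]; last by rewrite mul0r.
by case: hj; apply/val_inj.
Qed.

Lemma L0L0t (F : fieldType) k n : L0 F k n *m (L0 F k n)^T = U0mx F k n.
Proof.
apply/matrixP=> i j; rewrite !mxE.
case: (ltnP i k) => hi.
- rewrite (bigD1 (Ordinal hi)) //= big1 ?addr0.
    rewrite !mxE /= eqxx mul1r andbT; congr (_%:R); by rewrite eq_sym.
  move=> a /eqP ha; rewrite !mxE; case: (@eqP _ (i:nat) a) => [e|_]; last by rewrite mul0r.
  by case: ha; apply/val_inj.
- rewrite big1 ?andbF //.
  move=> a _; rewrite !mxE; case: (@eqP _ (i:nat) a) => [e|_]; last by rewrite mul0r.
  by have := ltn_ord a; rewrite -e ltnNge hi.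
Qed.

Lemma LR_split (F : fieldType) k n (E : 'M[F]_(k, n)) :
  E = E *m L0 F k n *m (L0 F k n)^T + E *m R0 F k n *m (R0 F k n)^T.
Proof.
by rewrite -!mulmxA -mulmxDr L0L0t U0mxE addrNK mulmx1.
Qed.

Lemma copidE (R : nzRingType) k r (a j : 'I_k) :
  (copid_mx r : 'M[R]_k) a j = if (a < r)%N then 0 else (a == j)%:R.
Proof. by rewrite -[copid_mx r]mulmx1 copid_mulE mxE. Qed.

Lemma pid_perm_copid (R : nzRingType) k b : (b <= k)%N ->
  (pid_mx b : 'M[R]_k) *m perm_mx (perm (@rev_ord_inj k)) *m copid_mx (k - b)
  = perm_mx (perm (@rev_ord_inj k)) *m copid_mx (k - b).
Proof.
move=> hb; apply/matrixP=> i j; rewrite -mulmxA pid_mulE.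
case: ifP => // /negbT; rewrite -leqNgt => hi.
rewrite -row_permE mxE copidE permE /=.
by case: ifP => // /negbT hh; have := ltn_ord i; lia.
Qed.

Lemma complete (F : fieldType) k b (A : 'M[F]_k) : (b <= k)%N ->
  copid_mx b *m A = A -> \rank A = (k - b)%N ->
  exists Z : 'M[F]_k, pid_mx b *m Z = Z /\ (Z + A) \in unitmx.
Proof.
move=> hb hcA rA.
set rho := perm (@rev_ord_inj k).
exists (perm_mx rho *m (A^C)%MS).
have hZ : pid_mx b *m (perm_mx rho *m (A^C)%MS) = perm_mx rho *m (A^C)%MS.
  by rewrite /complmx rA !mulmxA pid_perm_copid.
split => //.
have hA0 : (pid_mx b : 'M[F]_k) *m A = 0 by rewrite -hcA mulmxA mul_pid_mx_copid // mul0mx.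
have hcZ : copid_mx b *m (perm_mx rho *m (A^C)%MS) = 0.
  by rewrite -hZ !mulmxA mul_copid_mx_pid // !mul0mx.
rewrite -row_full_unit /row_full eqn_leq rank_leq_col /=.
have := addsmx_compl_full A; rewrite /row_full => /eqP hf; rewrite -[X in (X <= _)%N]hf.
apply: mxrankS; rewrite addsmx_sub; apply/andP; split.
- have e1 : A = copid_mx b *m (perm_mx rho *m (A^C)%MS + A).
    by rewrite mulmxDr hcZ add0r hcA.
  rewrite {1}e1; exact: submxMl.
- have e1 : (A^C)%MS = (perm_mx rho^-1 *m pid_mx b) *m (perm_mx rho *m (A^C)%MS + A).
    by rewrite -mulmxA mulmxDr hA0 addr0 hZ mulmxA -perm_mxM mulVg perm_mx1 mul1mx.
  rewrite {1}e1; exact: submxMl.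
Qed.

Lemma tr_copid (R : nzRingType) k b : (copid_mx b : 'M[R]_k)^T = copid_mx b.
Proof. by rewrite /copid_mx linearB /= trmx1 tr_pid_mx. Qed.

Lemma gmat_lower (F : fieldType) (L : fieldExtType F) k n b (E : 'M[F]_(k, n))
  (K : 'M[F]_(n - k)) :
  (k <= n)%N -> row_free E -> K \in unitmx -> E *m R0 F k n = pid_mx b *m K ->
  (b <= k)%N -> (b <= n - k)%N -> (b.+1 <= msize (\det (gmat L E)))%N.
Proof.
move=> hkn fE uK hG hb hbn.
pose D := E *m L0 F k n.
pose A := (copid_mx b : 'M[F]_k) *m D.
have hcA : copid_mx b *m A = A by rewrite /A mulmxA copid_mx_id.
have rA : \rank A = (k - b)%N.
  have e : copid_mx b *m E = A *m (L0 F k n)^T.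
    rewrite {1}(LR_split E) hG mulmxDr !mulmxA mul_copid_mx_pid // !mul0mx addr0.
    by rewrite /A /D !mulmxA.
  have := mxrankMfree (copid_mx b : 'M[F]_k) fE.
  rewrite e mxrankMfree ?rank_copid_mx //; apply/row_freeP; exists (L0 F k n); exact: L0tL0.
have [Z [hZ uW]] := complete hb hcA rA.
have hA0 : (pid_mx b : 'M[F]_k) *m A = 0 by rewrite -hcA mulmxA mul_pid_mx_copid // mul0mx.
have hcZ : (copid_mx b : 'M[F]_k) *m Z = 0 by rewrite -hZ !mulmxA mul_copid_mx_pid // !mul0mx.
pose kap : {rmorphism F -> {poly L}} := (polyC \o in_alg L)%FUN.
pose Q : 'M[F]_(k, n - k) := pid_mx b *m invmx K^T.
pose U1 : 'M[F]_(k, n - k) := - D^T *m Q.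
pose U2 : 'M[F]_(k, n - k) := Z^T *m Q.
pose h : 'I_(k * (n - k)) -> {poly L} :=
  fun i => kap (mxvec U1 0 i) + 'X * kap (mxvec U2 0 i).
pose phi := mmap (@polyC L) h.
have hsz : forall i, (size (h i) <= 2)%N.
  move=> i; apply: (leq_trans (size_polyD _ _)); rewrite geq_max; apply/andP; split.
    by apply: (leq_trans (size_polyC_leq1 _)).
  apply: (leq_trans (size_polyMleq _ _)); rewrite size_polyX.
  by rewrite add2n /= ltnS; exact: size_polyC_leq1.
have hpi : forall c, phi (@iota F L _ c) = kap c.
  by move=> c; rewrite /phi /iota /= mmapC.
have hpX : map_mx phi (Xmx L k n) = map_mx kap U1 + 'X *: map_mx kap U2.
  apply/matrixP=> a l; rewrite [LHS]mxE [Xmx _ _ _ _ _]mxE /phi mmapX mmap1U /h !mxvecE.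
  by rewrite !mxE.
have hQG : Q *m (E *m R0 F k n)^T = pid_mx b.
  rewrite hG trmx_mul tr_pid_mx /Q -mulmxA (mulmxA (invmx _)) mulVmx ?unitmx_tr //.
  by rewrite mul1mx mul_pid_mx minnn (minn_idPr hbn).
have hmap : map_mx phi (gmat L E) = map_mx kap A^T + 'X *: map_mx kap Z^T.
  rewrite /gmat map_mxD [map_mx phi (Xmx _ _ _ *m _)]map_mxM -!map_trmx -!map_mx_comp.
  rewrite !(@eq_map_mx _ _ _ _ kap (phi \o @iota F L _)) //.
  rewrite /Q -mulmxA in hQG.
  rewrite hpX mulmxDl -scalemxAl !map_trmx -!map_mxM /U1 /U2 -!mulmxA hQG.
  have e1 : Z^T *m pid_mx b = Z^T by rewrite -tr_pid_mx -trmx_mul hZ.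
  have e2 : A^T = D^T - D^T *m pid_mx b.
    by rewrite /A trmx_mul tr_copid /copid_mx mulmxBr mulmx1.
  by rewrite e1 e2 map_mxB mulNmx map_mxN addrA.
have hAr : forall (i a : 'I_k), (i < b)%N -> A i a = 0.
  by move=> i a hi; have := pid_mulE b A i a; rewrite hA0 mxE hi => <-.
have hZr : forall (i a : 'I_k), (b <= i)%N -> Z i a = 0.
  by move=> i a hi; have := copid_mulE b Z i a; rewrite hcZ mxE ltnNge hi /= => <-.
clearbody A.
have hdiag : map_mx kap A^T + 'X *: map_mx kap Z^T =
    map_mx kap (Z + A)^T *m diag_mx (\row_(i < k) (if (i < b)%N then 'X else 1)).
  apply/matrixP=> a i; rewrite mul_mx_diag !mxE.
  case: (ltnP i b) => hi.
    by rewrite hAr // rmorph0 add0r addr0 mulrC.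
  by rewrite hZr // rmorph0 mulr0 add0r addr0 mulr1.
have hdet : phi (\det (gmat L E)) = kap (\det (Z + A)) * 'X ^+ b.
  rewrite -[LHS]det_map_mx hmap hdiag det_mulmx det_map_mx det_tr det_diag.
  congr (_ * _).
  rewrite (eq_bigr (fun i : 'I_k => if (i < b)%N then 'X else 1)); last by move=> i _; rewrite mxE.
  by rewrite -big_mkcond -(big_ord_widen _ (fun _ => 'X) hb) prodr_const card_ord.
have hc : in_alg L (\det (Z + A)) != 0.
  by rewrite fmorph_eq0 -unitfE -unitmxE.
have hs : size (phi (\det (gmat L E))) = b.+1.
  by rewrite hdet /kap /= size_Cmul // size_polyXn.
rewrite -hs; exact: size_mmap.
Qed.
Unset Implicit Arguments.

Theorem lemma4p5 (F : finFieldType) (L : fieldExtType F) (m k n : nat)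
  (hm : (1 <= m)%N) (hL : \dim (fullv : {vspace L}) = m)
  (hk : (1 <= k)%N) (hkn : (k < n)%N)
  (E : 'M[F]_(k, n)) (hE : in_T E) :
  fE L (ltnW hkn) E != 0 /\
  tdeg (fE L (ltnW hkn) E) = (k - \rank (E :&: U0mx F k n)%MS)%N.
Proof.
have rfE : row_free E by case: hE => _ h; rewrite /row_free h.
pose G := E *m R0 F k n.
pose b := \rank G.
have hb : (b <= k)%N := rank_leq_row G.
have hbn : (b <= n - k)%N := rank_leq_col G.
pose P := invmx (col_ebase G).
have uP : P \in unitmx by rewrite unitmx_inv col_ebase_unit.
have hG' : (P *m E) *m R0 F k n = pid_mx b *m row_ebase G.
  rewrite -mulmxA -/G -{1}(mulmx_ebase G) !mulmxA mulVmx ?col_ebase_unit //.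
  by rewrite mul1mx.
have fE' : row_free (P *m E).
  by rewrite /row_free mxrankMfree // mxrank_unit.
have up := @gmat_upper F L k n b (P *m E).
have lo := gmat_lower L (ltnW hkn) fE' (row_ebase_unit G) hG' hb hbn.
have hz : forall (i : 'I_k) l, (b <= i)%N -> (P *m E *m R0 F k n) i l = 0.
  move=> i l hi; rewrite hG' mxE big1 // => j _; rewrite mxE.
  by rewrite [(i < b)%N]ltnNge hi andbF mul0r.
have := up hz hb => {up hz} up.
have hdetP : @iota F L (k * (n - k)) (\det P) != 0.
  by rewrite /iota /= mpolyC_eq0 scaler_eq0 oner_eq0 orbF -unitfE -unitmxE.
have eqs : msize (\det (gmat L (P *m E))) = msize (\det (gmat L E)).
  rewrite gmatM det_mulmx det_tr det_map_mx.
  have [->|nz] := eqVneq (\det (gmat L E)) 0; first by rewrite mul0r.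
  have m1 : msize (@iota F L (k * (n - k)) (\det P)) = 1%N.
    by rewrite /iota /= msizeC scaler_eq0 oner_eq0 orbF -unitfE -unitmxE uP.
  by rewrite msizeM // m1 addn1.
have hs : msize (fE L (ltnW hkn) E) = b.+1.
  rewrite fE_gmat -eqs; apply/eqP; rewrite eqn_leq up lo.
  done.
split.
  by rewrite -msize_poly_eq0 hs.
by rewrite /tdeg hs (rank_capU0 rfE) -/G -/b (subKn hb).
Qed.
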